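(* Let $\mathbf A\in\mathbb C^{n\times n}$ with $\operatorname{Ind}\mathbf A=k$ and $\operatorname{rank}\mathbf A^{k+1}=\operatorname{rank}\mathbf A^{k}=r\le n$. Then the Drazin inverse $\mathbf A^{D}=(a^{D}_{ij})$ satisfies, for all $i,j=1,\dots,n$, \[ a^{D}_{ij}=\frac{\sum_{\alpha\in I_{r,n}\{j\}}\left|\left(\mathbf A^{k+1}_{j.}(\mathbf a^{(k)}_{i.})\right)^{\alpha}_{\alpha}\right|}{\sum_{\alpha\in I_{r,n}}\left|(\mathbf A^{k+1})^{\alpha}_{\alpha}\right|} \quad\text{and}\quad a^{D}_{ij}=\frac{\sum_{\beta\in J_{r,n}\{i\}}\left|\left(\mathbf A^{k+1}_{.i}(\mathbf a^{(k)}_{.j})\right)^{\beta}_{\beta}\right|}{\sum_{\beta\in J_{r,n}}\left|(\mathbf A^{k+1})^{\beta}_{\beta}\right|}, \] where $\mathbf a^{(k)}_{i.}$ and $\mathbf a^{(k)}_{.j}$ denote the $i$-th row and the $j$-th column of $\mathbf A^{k}$.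
   Context: All matrices are complex. $\operatorname{Ind}\mathbf A$ is the smallest nonnegative integer $k$ with $\operatorname{rank}\mathbf A^{k+1}=\operatorname{rank}\mathbf A^{k}$. The Drazin inverse $\mathbf A^{D}$ is the unique $\mathbf X$ with $\mathbf A^{k+1}\mathbf X=\mathbf A^{k}$, $\mathbf X\mathbf A\mathbf X=\mathbf X$, $\mathbf A\mathbf X=\mathbf X\mathbf A$, where $k=\operatorname{Ind}\mathbf A$. For a square matrix $\mathbf M$, $\mathbf M_{.i}(\mathbf c)$ (resp. $\mathbf M_{i.}(\mathbf c)$) is the matrix obtained from $\mathbf M$ by replacing its $i$-th column (resp. row) by the column (resp. row) vector $\mathbf c$. For $1\le k\le p$, $L_{k,p}$ is the set of strictly increasing sequences of $k$ elements of $\{1,\dots,p\}$; $I_{k,p}=J_{k,p}=L_{k,p}$, and $I_{k,p}\{i\}=J_{k,p}\{i\}=\{\alpha\in L_{k,p}:i\in\alpha\}$. $\mathbf M^{\alpha}_{\alpha}$ is the principal submatrix with rows and columns indexed by $\alpha$, and $|\cdot|$ denotes the determinant. *)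

(* Defs.v *)
From HB Require Import structures.
From mathcomp Require Import all_boot all_order all_algebra.
From mathcomp Require Import complex.
From mathcomp Require Import reals.
Set Implicit Arguments. Unset Strict Implicit. Unset Printing Implicit Defensive.
Import Order.TTheory GRing.Theory Num.Theory.
Local Open Scope ring_scope.

Section Defs.
Variable F : fieldType.
Variable n : nat.

(* existence of an index: the rank sequence of powers is nonincreasing and bounded,
   hence eventually stabilizes; we use a classical definition via ex_minn. *)
Lemma ind_exists (A : 'M[F]_n) :
  exists k, \rank (A ^+ k.+1) == \rank (A ^+ k).
Proof.
case: (boolP [exists m : 'I_n.+1, \rank (A ^+ m.+1) == \rank (A ^+ m)]).
  by case/existsP=> m Hm; exists m.
rewrite negb_exists => /forallP Hne; exfalso.
have key : forall m, (m <= n.+1)%N -> (\rank (A ^+ m) + m <= n)%N.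
  elim=> [|m IH] Hm; first by rewrite expr0 addn0 rank_leq_row.
  have Hm' : (m < n.+1)%N by [].
  have := Hne (Ordinal Hm') => /= Hneq.
  have Hle : (\rank (A ^+ m.+1) <= \rank (A ^+ m))%N.
    by rewrite exprSr mxrankM_maxl.
  have Hlt : (\rank (A ^+ m.+1) < \rank (A ^+ m))%N by rewrite ltn_neqAle Hneq Hle.
  have := IH (ltnW Hm); rewrite addnS; apply: leq_trans; by rewrite ltn_add2r.
by have := key n.+1 (leqnn _); rewrite addnS ltnNge leq_addl.
Qed.

Definition ind (A : 'M[F]_n) : nat := ex_minn (ind_exists A).

Definition is_drazin (A X : 'M[F]_n) : Prop :=
  let k := ind A in
  [/\ A ^+ k.+1 *m X = A ^+ k, X *m A *m X = X & A *m X = X *m A].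

Definition row_repl (M : 'M[F]_n) (i : 'I_n) (c : 'rV[F]_n) : 'M[F]_n :=
  \matrix_(p, q) (if p == i then c 0 q else M p q).

Definition col_repl (M : 'M[F]_n) (j : 'I_n) (c : 'cV[F]_n) : 'M[F]_n :=
  \matrix_(p, q) (if q == j then c p 0 else M p q).

Definition princ_sub (M : 'M[F]_n) (alpha : {set 'I_n}) : 'M[F]_#|alpha| :=
  \matrix_(p, q) M (enum_val p) (enum_val q).

End Defs.

(* Main.v *)
Require Import Defs.
From HB Require Import structures.
From mathcomp Require Import all_boot all_order all_algebra.
From mathcomp Require Import complex.
From mathcomp Require Import reals.
From mathcomp Require Import fingroup perm zify.
Import Order.TTheory GRing.Theory Num.Theory.
Local Open Scope ring_scope.
Set Implicit Arguments. Unset Strict Implicit. Unset Printing Implicit Defensive.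
Section Gen.
Variable R : comNzRingType.

Definition psubR n (M : 'M[R]_n) (J : {set 'I_n}) : 'M[R]_#|J| :=
  \matrix_(p, q) M (enum_val p) (enum_val q).

Lemma det_reindex k m (h : 'I_k -> 'I_m) (X : 'M[R]_m) :
  injective h -> k = m -> \det (\matrix_(p, q) X (h p) (h q)) = \det X.
Proof.
move=> inj e; subst k.
pose s := perm inj.
have -> : \matrix_(p, q) X (h p) (h q) = row_perm s (col_perm s X).
  by apply/matrixP => p q; rewrite !mxE !permE.
rewrite row_permE col_permE !det_mulmx !det_perm odd_permV.
by rewrite mulrCA -signr_addb addbb mulr1.
Qed.

Lemma splitl m k (a : 'I_m) : split (lshift k a) = inl a.
Proof. exact: (unsplitK (inl a)). Qed.
Lemma splitr m k (a : 'I_k) : split (rshift m a) = inr a.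
Proof. exact: (unsplitK (inr a)). Qed.

Definition Mrows n (M : 'M[R]_n) (J : {set 'I_n}) : 'M[R]_n :=
  \matrix_(i, j) (if i \in J then M i j else (i == j)%:R).

Lemma det_Mrows n (M : 'M[R]_n) (J : {set 'I_n}) :
  \det (Mrows M J) = \det (psubR M J).
Proof.
have e : (#|J| + #|~: J| = n)%N by rewrite cardsC card_ord.
pose h (p : 'I_(#|J| + #|~: J|)) : 'I_n :=
  match split p with inl a => @enum_val _ (mem J) a | inr b => @enum_val _ (mem (~: J)) b end.
have hinj : injective h.
  move=> p q; rewrite /h -{2}[p]splitK -{2}[q]splitK.
  case: (split p) => a; case: (split q) => b.
  - by move/enum_val_inj ->.
  - by move=> E; have := @enum_valP _ (mem J) a; rewrite E; have := @enum_valP _ (mem (~: J)) b; rewrite inE => /negPf ->.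
  - by move=> E; have := @enum_valP _ (mem J) b; rewrite -E; have := @enum_valP _ (mem (~: J)) a; rewrite inE => /negPf ->.
  - by move/enum_val_inj ->.
rewrite -(det_reindex (Mrows M J) hinj e).
set N := \matrix_(p, q) _.
rewrite -[N]submxK.
have -> : dlsubmx N = 0.
  apply/matrixP => a b; rewrite !mxE /h ?splitl ?splitr.
  have := @enum_valP _ (mem (~: J)) a; rewrite inE => /negPf ->.
  case: eqP => // E; have := @enum_valP _ (mem J) b; rewrite -E.
  by have := @enum_valP _ (mem (~: J)) a; rewrite inE => /negPf ->.
rewrite det_ublock.
have -> : drsubmx N = 1%:M.
  apply/matrixP => a b; rewrite !mxE /h ?splitl ?splitr.
  have := @enum_valP _ (mem (~: J)) a; rewrite inE => /negPf ->.
  by rewrite (inj_eq enum_val_inj).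
have -> : ulsubmx N = psubR M J.
  apply/matrixP => a b; rewrite !mxE /h ?splitl ?splitr.
  by rewrite (@enum_valP _ (mem J) a).
by rewrite det1 mulr1.
Qed.

Lemma det_diag_plus n (X M : 'M[R]_n) (D : 'I_n -> R) :
  (forall i j, X i j = (if i == j then D i else 0) + M i j) ->
  \det X = \sum_(J : {set 'I_n}) (\prod_(i in ~: J) D i) * \det (psubR M J).
Proof.
move=> HX.
under eq_bigr => J _ do rewrite -det_Mrows.
rewrite /determinant.
under eq_bigr => J _ do rewrite big_distrr /=.
rewrite exchange_big /=; apply: eq_bigr => s _.
under eq_bigr => i _ do rewrite HX addrC.
rewrite bigA_distr big_distrr /=; apply: eq_bigr => J _.
rewrite mulrCA; congr (_ * _).
rewrite (big_mkcond (fun i => i \in ~: J)) -big_split /=.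
apply: eq_bigr => i _; rewrite !mxE inE.
by case: (i \in J); rewrite /= ?mul1r //; case: eqP; rewrite ?mulr1 ?mulr0.
Qed.
End Gen.
Lemma sylv (F : fieldType) m k (Fm : 'M[F]_(m, k)) (Gm : 'M[F]_(k, m)) :
  'X^k * \det ('X%:M + map_mx polyC (Fm *m Gm)) =
  \det ('X%:M + map_mx polyC (Gm *m Fm)) * 'X^m.
Proof.
rewrite !map_mxM.
set F' := map_mx polyC Fm; set G' := map_mx polyC Gm.
pose M := block_mx 1%:M (- G') F' ('X%:M : 'M[{poly F}]_m).
pose L1 := block_mx 1%:M 0 (- F') (1%:M : 'M[{poly F}]_m).
pose L2 := block_mx ('X%:M : 'M[{poly F}]_k) G' 0 (1%:M : 'M[{poly F}]_m).
have e1 : L1 *m M = block_mx 1%:M (- G') 0 ('X%:M + F' *m G').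
  rewrite mulmx_block !mul1mx !mul0mx !addr0 mulmx1 mulNmx mulmxN opprK addNr.
  by rewrite addrC.
have e2 : L2 *m M = block_mx ('X%:M + G' *m F') 0 F' ('X%:M).
  rewrite mulmx_block !mul1mx !mul0mx !add0r !mulmx1 mulmxN mul_scalar_mx mul_mx_scalar.
  by rewrite addNr.
have d1 := congr1 determinant e1; have d2 := congr1 determinant e2.
rewrite det_mulmx det_lblock !det1 mul1r det_ublock det1 mul1r in d1.
rewrite det_mulmx det_ublock det1 mulr1 det_lblock det_scalar in d2.
by rewrite mul1r in d1; rewrite -d1 d2 det_scalar.
Qed.

Section Fld.
Variable F : fieldType.
Variable n : nat.
Variable B : 'M[F]_n.

Definition PB : 'M[{poly F}]_n := 'X%:M + map_mx polyC B.
Definition Qs s : 'M[F]_n := \matrix_(a, b) ((\adj PB a b)`_s).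

Lemma psub_map (M : 'M[F]_n) J : psubR (map_mx polyC M) J = map_mx polyC (princ_sub M J).
Proof. by apply/matrixP => p q; rewrite !mxE. Qed.

Lemma coef_det_gen (X : 'M[{poly F}]_n) (M : 'M[F]_n) (oj : option 'I_n) s :
  (forall i j, X i j = (if i == j then (if Some i == oj then 0 else 'X) else 0) + (M i j)%:P) ->
  (s <= n)%N ->
  (\det X)`_s = \sum_(J : {set 'I_n} | (#|J| == n - s)%N && (if oj is Some j then j \in J else true))
                   \det (princ_sub M J).
Proof.
move=> HX sn; rewrite (@det_diag_plus _ _ X (map_mx polyC M) (fun i => if Some i == oj then 0 else 'X)); last first.
  by move=> i j; rewrite HX mxE.
clear HX.
rewrite coef_sum [RHS]big_mkcond /=; apply: eq_bigr => J _.
rewrite psub_map det_map_mx /=.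
have cJ := cardsC J; rewrite card_ord in cJ.
case: oj => [j|]; last first.
  rewrite prodr_const mulrC coefCM coefXn.
  have -> : (s == #|~: J|) = (#|J| == n - s)%N by apply/eqP/eqP; lia.
  by case: eqP; rewrite ?mulr1 ?mulr0.
case: (boolP (j \in J)) => jJ.
  rewrite (eq_bigr (fun _ => 'X)); last first.
    by move=> i; rewrite inE; case: eqP => // -[->]; rewrite jJ.
  rewrite prodr_const mulrC coefCM coefXn andbT.
  have -> : (s == #|~: J|) = (#|J| == n - s)%N by apply/eqP/eqP; lia.
  by case: eqP; rewrite ?mulr1 ?mulr0.
rewrite (bigD1 j) /=; last by rewrite inE.
by rewrite eqxx !mul0r coef0 andbF.
Qed.

Lemma coef_det s : (s <= n)%N ->
  (\det PB)`_s = \sum_(J : {set 'I_n} | (#|J| == n - s)%N) \det (princ_sub B J).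
Proof.
move=> sn; rewrite (@coef_det_gen PB B None s) //.
  by apply: eq_bigl => J; rewrite andbT.
by move=> i j; rewrite !mxE; case: eqP.
Qed.


Lemma row_coef (c : 'rV[F]_n) j0 s : (s <= n)%N ->
  \sum_(J : {set 'I_n} | (#|J| == n - s)%N && (j0 \in J)) \det (princ_sub (row_repl B j0 c) J)
   = (c *m Qs s) 0 j0.
Proof.
move=> sn.
pose X := \matrix_(p, q) if p == j0 then (c 0 q)%:P else PB p q.
rewrite -(@coef_det_gen X (row_repl B j0 c) (Some j0) s) //; last first.
  move=> p q; rewrite !mxE (inj_eq Some_inj).
  by case: (p == j0); case: (p == q); rewrite /= ?add0r ?addr0 ?mulr1n ?mulr0n.
rewrite (expand_det_row X j0) coef_sum mxE; apply: eq_bigr => q _.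
rewrite !mxE eqxx coefCM; congr (_ * _).
suff -> : cofactor X j0 q = cofactor PB j0 q by [].
rewrite /cofactor; congr (_ * \det _).
by apply/matrixP => a b; rewrite !mxE eq_sym (negPf (neq_lift _ _)).
Qed.

Lemma col_coef (c : 'cV[F]_n) i0 s : (s <= n)%N ->
  \sum_(J : {set 'I_n} | (#|J| == n - s)%N && (i0 \in J)) \det (princ_sub (col_repl B i0 c) J)
   = (Qs s *m c) i0 0.
Proof.
move=> sn.
pose X := \matrix_(p, q) if q == i0 then (c p 0)%:P else PB p q.
rewrite -(@coef_det_gen X (col_repl B i0 c) (Some i0) s) //; last first.
  move=> p q; rewrite !mxE; case: (eqVneq q i0) => [->|qi].
    by rewrite (inj_eq Some_inj); case: (p == i0); rewrite add0r.
  rewrite (inj_eq Some_inj); case: (eqVneq p q) => [->|pq]; first by rewrite (negPf qi) mulr1n.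
  by rewrite mulr0n.
rewrite (expand_det_col X i0) coef_sum mxE; apply: eq_bigr => p _.
rewrite !mxE eqxx coefCM mulrC; congr (_ * _).
suff -> : cofactor X p i0 = cofactor PB p i0 by [].
rewrite /cofactor; congr (_ * \det _).
by apply/matrixP => a b; rewrite !mxE eq_sym (negPf (neq_lift _ _)).
Qed.


Lemma PBE : PB = 'X%:M + map_mx polyC B. Proof. by []. Qed.

Lemma R1 s : (if s is s'.+1 then Qs s' else 0) + B *m Qs s = ((\det PB)`_s)%:M.
Proof.
apply/matrixP=> a b.
have := congr1 (fun M : 'M[{poly F}]_n => (M a b)`_s) (mul_mx_adj PB).
rewrite /= {1}PBE mulmxDl mul_scalar_mx !mxE coefD coefXM coefMn => <-.
congr (_ + _); first by case: s => [|s]; rewrite /= ?mxE.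
rewrite coef_sum; apply: eq_bigr => l _; by rewrite !mxE coefCM.
Qed.

Lemma R2 s : (if s is s'.+1 then Qs s' else 0) + Qs s *m B = ((\det PB)`_s)%:M.
Proof.
apply/matrixP=> a b.
have := congr1 (fun M : 'M[{poly F}]_n => (M a b)`_s) (mul_adj_mx PB).
rewrite /= {2}PBE mulmxDr mul_mx_scalar !mxE coefD coefXM coefMn => <-.
congr (_ + _); first by case: s => [|s]; rewrite /= ?mxE.
rewrite coef_sum; apply: eq_bigr => l _; by rewrite !mxE coefMC.
Qed.

Lemma minor_zero (J : {set 'I_n}) : (\rank B < #|J|)%N -> \det (princ_sub B J) = 0.
Proof.
move=> lt; apply/eqP; apply: contraTT lt => /negbTE nz.
have u : princ_sub B J \in unitmx by rewrite unitmxE unitfE nz.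
rewrite -row_full_unit /row_full in u.
rewrite -leqNgt -(eqP u).
have -> : princ_sub B J = rowsub enum_val 1%:M *m B *m colsub enum_val 1%:M.
  by rewrite mul_rowsub_mx mul1mx mulmx_colsub mulmx1; apply/matrixP => p q; rewrite !mxE.
by apply: leq_trans (mxrankM_maxl _ _) (mxrankM_maxr _ _).
Qed.

Lemma p_low s : (s < n - \rank B)%N -> (\det PB)`_s = 0.
Proof.
move=> sl; rewrite coef_det; last by lia.
by rewrite big1 // => J /eqP cJ; apply: minor_zero; lia.
Qed.

Lemma kill s : (s < n - \rank B)%N -> B ^+ s.+1 *m Qs s = 0 /\ Qs s *m B ^+ s.+1 = 0.
Proof.
have z : (0 : F)%:M = 0 :> 'M_n by apply/matrixP => ? ?; rewrite !mxE mul0rn.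
elim: s => [|s IH] sl.
  have h1 := R1 0; have h2 := R2 0; rewrite p_low // z in h1 h2.
  by rewrite expr1 -[B *m _]add0r h1 -[Qs 0 *m B]add0r h2.
have [I1 I2] := IH (ltnW sl).
have h1 := R1 s.+1; have h2 := R2 s.+1; rewrite p_low // z in h1 h2.
have e1 : B *m Qs s.+1 = - Qs s by apply/eqP; rewrite -subr_eq0 opprK addrC h1.
have e2 : Qs s.+1 *m B = - Qs s by apply/eqP; rewrite -subr_eq0 opprK addrC h2.
split.
  by rewrite exprSr mulmxE -mulrA -mulmxE e1 mulmxN I1 oppr0.
by rewrite exprS mulmxE mulrA -mulmxE e2 mulNmx I2 oppr0.
Qed.


Lemma dnz : \rank (B *m B) = \rank B -> (\det PB)`_(n - \rank B) != 0.
Proof.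
move=> rk.
have := sylv (col_base B) (row_base B); rewrite mulmx_base -PBE.
set GF := row_base B *m col_base B => e.
have := congr1 (fun p : {poly F} => p`_n) e.
rewrite /= coefXnM coefMXn ltnn subnn.
have -> : (n < \rank B)%N = false by apply/negbTE; rewrite -leqNgt rank_leq_col.
move=> ->; rewrite -horner_coef0 -horner_evalE -det_map_mx.
have -> : map_mx (horner_eval 0) ('X%:M + map_mx polyC GF) = GF.
  by apply/matrixP => a b; rewrite !mxE horner_evalE hornerD hornerMn hornerX hornerC mul0rn add0r.
rewrite -unitfE -unitmxE -row_full_unit /row_full eqn_leq rank_leq_row /=.
rewrite -{1}rk -{1 2}(mulmx_base B) mulmxA.
by apply: leq_trans (mxrankM_maxl _ _) _; rewrite -mulmxA; apply: mxrankM_maxr.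
Qed.

End Fld.
Lemma stab (F : fieldType) n (A : 'M[F]_n) k :
  \rank (A ^+ k.+1) = \rank (A ^+ k) -> forall t, \rank (A ^+ (k + t)) = \rank (A ^+ k).
Proof.
move=> rk.
have sub : (A ^+ k.+1 <= A ^+ k)%MS by rewrite exprS -mulmxE submxMl.
have : (A ^+ k <= A ^+ k.+1)%MS.
  by have [_ <-] := mxrank_leqif_sup sub; rewrite rk.
case/submxP => X eX.
elim=> [|t IH]; first by rewrite addn0.
rewrite -IH; apply/eqP; rewrite eqn_leq; apply/andP; split.
  by rewrite addnS exprSr -mulmxE mxrankM_maxl.
have -> : A ^+ (k + t) = X *m A ^+ (k + t).+1.
  by rewrite exprD eX -addSn exprD; exact: esym (mulmxA _ _ _).
by rewrite addnS mxrankM_maxr.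
Qed.

Lemma dpow (Rg : pzRingType) (a x : Rg) : GRing.comm a x -> x * a * x = x ->
  forall t, x = x ^+ t.+1 * a ^+ t.
Proof.
move=> c h.
have hE : forall t, x * (x * a) ^+ t = x.
  elim=> [|t IH]; first by rewrite expr0 mulr1.
  by rewrite exprSr mulrA IH -c mulrA h.
move=> t; rewrite exprS -mulrA -exprMn_comm ?hE //.
Qed.

Unset Implicit Arguments.
Local Open Scope complex_scope.
Theorem theorem2p7 (R : realType) (n : nat) (A AD : 'M[R[i]]_n) (k r : nat) :
  ind A = k ->
  \rank (A ^+ k.+1) = \rank (A ^+ k) ->
  \rank (A ^+ k) = r ->
  (r <= n)%N ->
  is_drazin A AD ->
  forall i j : 'I_n,
    AD i j =
      (\sum_(alpha : {set 'I_n} | (#|alpha| == r) && (j \in alpha))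
          \det (princ_sub (row_repl (A ^+ k.+1) j (row i (A ^+ k))) alpha))
      / (\sum_(alpha : {set 'I_n} | #|alpha| == r)
          \det (princ_sub (A ^+ k.+1) alpha))
    /\
    AD i j =
      (\sum_(beta : {set 'I_n} | (#|beta| == r) && (i \in beta))
          \det (princ_sub (col_repl (A ^+ k.+1) i (col j (A ^+ k))) beta))
      / (\sum_(beta : {set 'I_n} | #|beta| == r)
          \det (princ_sub (A ^+ k.+1) beta)).
Proof.
move=> hk hr1 hr2 rn; rewrite /is_drazin hk => -[H1 H2 H3] i j.
set B := A ^+ k.+1; set C := A ^+ k.
have rB : \rank B = r by rewrite /B hr1.
have rBB : \rank (B *m B) = \rank B.
  rewrite mulmxE -exprD /B hr1.
  have -> : (k.+1 + k.+1 = k + k.+2)%N by lia.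
  exact: stab hr1 _.
have dz := dnz rBB; rewrite rB in dz.
set u := (n - r)%N in dz.
set d := (\det (PB B))`_u in dz.
have ru : (n - u)%N = r by rewrite /u; lia.
have Hrel1 := R1 B u; have Hrel2 := R2 B u; rewrite -/d in Hrel1 Hrel2.
set Q' := (if u is u'.+1 then Qs B u' else 0) in Hrel1 Hrel2.
have KL : B ^+ u *m Q' = 0 /\ Q' *m B ^+ u = 0.
  rewrite /Q'; case Eu : u => [|u']; first by rewrite mulmx0 mul0mx.
  by apply: kill; rewrite rB -/u Eu.
have c : GRing.comm A AD by exact: H3.
have dp := @dpow _ _ _ c H2.
have ADl : AD = AD ^+ (k.+1 * u).+1 *m B ^+ u by rewrite /B -exprM; exact: dp.
have cc : GRing.comm (AD ^+ (k.+1 * u).+1) (B ^+ u).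
  rewrite /B -exprM; apply: commrX; apply: commr_sym; apply: commrX; exact: c.
have ADr : AD = B ^+ u *m AD ^+ (k.+1 * u).+1 by rewrite {1}ADl; exact: cc.
have e1 : AD *m Q' = 0 by rewrite ADl -mulmxA KL.1 mulmx0.
have e2 : Q' *m AD = 0 by rewrite ADr mulmxA KL.2 mul0mx.
have CB : C = B *m AD by rewrite /C -H1.
have CB' : C = AD *m B.
  rewrite CB; apply: commr_sym; rewrite /B; apply: commrX; apply: commr_sym; exact: c.
have eq1 : C *m Qs B u = d *: AD.
  have h : B *m Qs B u = d%:M - Q' by rewrite -Hrel1 [Q' + _]addrC addrK.
  by rewrite CB' -mulmxA h mulmxBr e1 subr0 mul_mx_scalar.
have eq2 : Qs B u *m C = d *: AD.
  have h : Qs B u *m B = d%:M - Q' by rewrite -Hrel2 [Q' + _]addrC addrK.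
  by rewrite CB mulmxA h mulmxBl e2 subr0 mul_scalar_mx.
have denc := coef_det B (leq_subr r n); rewrite -/u ru in denc.
have rowc := row_coef B (row i C) j (leq_subr r n); rewrite -/u ru in rowc.
have colc := col_coef B (col j C) i (leq_subr r n); rewrite -/u ru in colc.
rewrite rowc colc -denc -/d; split.
  have -> : (row i C *m Qs B u) 0 j = (C *m Qs B u) i j.
    by rewrite !mxE; apply: eq_bigr => l _; rewrite !mxE.
  by rewrite eq1 mxE mulrC mulKf.
have -> : (Qs B u *m col j C) i 0 = (Qs B u *m C) i j.
  by rewrite !mxE; apply: eq_bigr => l _; rewrite !mxE.
by rewrite eq2 mxE mulrC mulKf.
Qed.
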